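(* Let $k$ be a field of characteristic $0$, $L/k$ a field extension, $S\in\mathbf{Fam}_L$ with data $a,b,t_0\in L$, and let $\{\mathcal{T}_\gamma\}$ be the one-parameter family of trisections described in the context. Let $R=(x_R,y_R,t_R)\in\mathcal{E}$ with $t_R\neq t_0$. Then there exists a unique $\gamma\in L(x_R,y_R,t_R)$ such that $R\in\mathcal{T}_\gamma$. In particular, if $R$ is $L$-rational, there is $\gamma\in L$ with $R\in\mathcal{T}_\gamma$.
   Context: $S$ is a del Pezzo surface of degree one in $\mathbb{P}(2,3,1,1)$, coordinates $(X:Y:Z:W)$, given by $Y^2=X^3+F(Z,W)X+G(Z,W)$, $F,G\in k[Z,W]$ homogeneous of degrees $4,6$; $f(t)=F(t,1)$, $g(t)=G(t,1)$; $\mathcal{E}:y^2=x^3+f(t)x+g(t)$ is the rational elliptic surface obtained by blowing up the base point of $|-K_S|$. $S\in\mathbf{Fam}_L$ means there exist $a,b,t_0\in L$ with $t_0\neq0$, $at_0+b\neq0$, $f(t_0)\neq-(at_0+b)^4/3$, such that $t_0$ is a double root of $P(t)=-f(t)^2/4+(at+b)^4f(t)/6+(at+b)^2g(t)+(at+b)^8/108$. Let $Q=((at_0+b)^2/3,\ (at_0+b)^3/6+f(t_0)/(2(at_0+b)),\ t_0)$. For a parameter $\gamma$, $\mathcal{T}_\gamma\subset\mathcal{E}$ is the curve $y=axt+bx+c(\gamma)t^3+d(\gamma)t^2+e(\gamma)t+\gamma$, where $c(\gamma),d(\gamma),e(\gamma)$ are the coefficients, uniquely determined by $\gamma$, for which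 $\mathcal{T}_\gamma$ has a triple point at $Q$. *)

(* Defs.v *)
From HB Require Import structures.
From mathcomp Require Import all_boot all_order all_algebra.
Set Implicit Arguments. Unset Strict Implicit. Unset Printing Implicit Defensive.
Import GRing.Theory.
Local Open Scope ring_scope.

(* F(1,W) for a form F(Z,W) of degree n with F(t,1) = p(t): the reversal
   sum_i p_i W^(n-i). *)
Definition homrev (R : nzRingType) (n : nat) (p : {poly R}) : {poly R} :=
  \poly_(i < n.+1) p`_(n - i).

Definition singular_pt (K : fieldType) (f g : {poly K}) (x y t : K) : Prop :=
  [/\ y ^+ 2 = x ^+ 3 + f.[t] * x + g.[t], 2 * y = 0,
      3 * x ^+ 2 + f.[t] = 0 & f^`().[t] * x + g^`().[t] = 0].

(* S : Y^2 = X^3 + F X + G in P(2,3,1,1) is smooth (geometrically): no singular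
   point over any field extension, in the charts W = 1 and Z = 1.  (The points
   with Z = W = 0 reduce to (1:1:0:0), which is always smooth.) *)
Definition smooth_dP1 (k : fieldType) (f g : {poly k}) : Prop :=
  forall (K : fieldType) (phi : {rmorphism k -> K}) (x y t : K),
    ~ singular_pt (map_poly phi f) (map_poly phi g) x y t /\
    ~ singular_pt (map_poly phi (homrev 4 f)) (map_poly phi (homrev 6 g)) x y t.

Definition PFam (L : fieldType) (fL gL : {poly L}) (a b : L) : {poly L} :=
  let l := a *: 'X + b%:P in
  (- (4%:R)^-1) *: fL ^+ 2 + (6%:R)^-1 *: (l ^+ 4 * fL) + l ^+ 2 * gL
  + (108%:R)^-1 *: l ^+ 8.

Definition double_root (L : fieldType) (p : {poly L}) (t0 : L) : Prop :=
  (('X - t0%:P) ^+ 2 %| p) && ~~ (('X - t0%:P) ^+ 3 %| p).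

Definition in_Fam (L : fieldType) (fL gL : {poly L}) (a b t0 : L) : Prop :=
  [/\ t0 != 0, a * t0 + b != 0, fL.[t0] != - (a * t0 + b) ^+ 4 / 3%:R
    & double_root (PFam fL gL a b) t0].

(* x- and y-coordinates of Q (its t-coordinate is t0) *)
Definition Qx (L : fieldType) (a b t0 : L) : L := (a * t0 + b) ^+ 2 / 3%:R.
Definition Qy (L : fieldType) (fL : {poly L}) (a b t0 : L) : L :=
  (a * t0 + b) ^+ 3 / 6%:R + fL.[t0] / (2%:R * (a * t0 + b)).

(* The plane equation H(x,t) = l(x,t)^2 - x^3 - f(t) x - g(t) of the image of
   T : y = l(x,t) := a x t + b x + c t^3 + d t^2 + e t + gam  in the (x,t)-plane,
   as a polynomial in x (outer variable) with coefficients polynomials in t. *)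
Definition trisec_poly (M : fieldType) (fM gM : {poly M}) (a b c d e gam : M)
  : {poly {poly M}} :=
  let l : {poly {poly M}} :=
    'X * (a *: 'X + b%:P)%:P
    + (c *: 'X ^+ 3 + d *: 'X ^+ 2 + e *: 'X + gam%:P)%:P in
  l ^+ 2 - 'X ^+ 3 - 'X * fM%:P - gM%:P.

(* the plane curve P = 0 has multiplicity >= m at (x0,t0): all monomials of
   total degree < m of P(x0 + X, t0 + T) vanish *)
Definition mult_ge (M : fieldType) (m : nat) (P : {poly {poly M}}) (x0 t0 : M)
  : Prop :=
  let P' := map_poly (fun q : {poly M} => q \Po ('X + t0%:P))
                     (P \Po ('X + (x0%:P)%:P)) in
  forall i j : nat, (i + j < m)%N -> P'`_i`_j = 0.

Definition on_trisec (M : fieldType) (a b c d e gam x y t : M) : Prop :=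
  y = a * x * t + b * x + c * t ^+ 3 + d * t ^+ 2 + e * t + gam.

Definition triple_at (M : fieldType) (fM gM : {poly M}) (a b c d e gam xQ yQ tQ : M)
  : Prop :=
  on_trisec a b c d e gam xQ yQ tQ /\
  mult_ge 3 (trisec_poly fM gM a b c d e gam) xQ tQ.

Definition in_T (M : fieldType) (fM gM : {poly M}) (a b xQ yQ tQ gam x y t : M)
  : Prop :=
  exists c d e : M,
    triple_at fM gM a b c d e gam xQ yQ tQ /\ on_trisec a b c d e gam x y t.

Definition subfield_pred (M : fieldType) (S : M -> Prop) : Prop :=
  [/\ S 0, S 1, (forall x y, S x -> S y -> S (x + y)), (forall x, S x -> S (- x))
    & (forall x y, S x -> S y -> S (x * y)) /\ (forall x, S x -> x != 0 -> S x^-1)].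

(* z belongs to the subfield L(x,y,t) of M generated by j(L) and x, y, t *)
Definition in_gen_field (L M : fieldType) (j : {rmorphism L -> M}) (x y t z : M)
  : Prop :=
  forall S : M -> Prop, subfield_pred S -> (forall l, S (j l)) ->
    S x -> S y -> S t -> S z.

(* Main.v *)
Require Import Defs.
From HB Require Import structures.
From mathcomp Require Import all_boot all_order all_algebra.
From mathcomp Require Import ring.
Import GRing.Theory.
Local Open Scope ring_scope.


Lemma Phi_gen (M : fieldType) (S Mm F G Y : {poly M}) (x0 : M) :
 map_poly (comp_poly Y) ((('X * S%:P + Mm%:P)^+2 - 'X ^+ 3 - 'X * F%:P - G%:P) \Po ('X + (x0%:P)%:P)) =
 (('X + (x0%:P)%:P) * (S \Po Y)%:P + (Mm \Po Y)%:P)^+2 - ('X + (x0%:P)%:P)^+3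
   - ('X + (x0%:P)%:P) * (F \Po Y)%:P - (G \Po Y)%:P.
Proof.
rewrite !(rmorphB, rmorphD, rmorphM, rmorphXn) /=.
rewrite !comp_polyX !comp_polyC.
rewrite !(rmorphB, rmorphD, rmorphM, rmorphXn) /=.
by rewrite !map_polyX !map_polyC /= comp_polyC.
Qed.

Lemma PhiH (M : fieldType) (fM gM : {poly M}) (a b c d e gam x0 t0 : M) :
 map_poly (comp_poly ('X + t0%:P)) (trisec_poly fM gM a b c d e gam \Po ('X + (x0%:P)%:P)) =
 (('X + (x0%:P)%:P) * ((a *: 'X + b%:P) \Po ('X + t0%:P))%:P
   + ((c *: 'X ^+ 3 + d *: 'X ^+ 2 + e *: 'X + gam%:P) \Po ('X + t0%:P))%:P)^+2
 - ('X + (x0%:P)%:P)^+3 - ('X + (x0%:P)%:P) * (fM \Po ('X + t0%:P))%:P - (gM \Po ('X + t0%:P))%:P.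
Proof. exact: Phi_gen. Qed.

Lemma coefM1 (M : fieldType) (p q : {poly M}) : (p * q)`_1 = p`_0 * q`_1 + p`_1 * q`_0.
Proof. by rewrite coefM !big_ord_recr big_ord0 /= add0r. Qed.
Lemma coefM2 (M : fieldType) (p q : {poly M}) :
  (p * q)`_2 = p`_0 * q`_2 + p`_1 * q`_1 + p`_2 * q`_0.
Proof. by rewrite coefM !big_ord_recr big_ord0 /= add0r. Qed.

Lemma E_Poly (M : fieldType) (sg mu ph ps : {poly M}) (x0 : M) :
  let X1 := 'X + (x0%:P)%:P in
  let u := x0%:P * sg + mu in
  (X1 * sg%:P + mu%:P)^+2 - X1^+3 - X1 * ph%:P - ps%:P =
  Poly [:: u^+2 - (x0^+3)%:P - x0%:P * ph - ps;
           (sg * u) *+ 2 - (3%:R * x0^+2)%:P - ph;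
           sg^+2 - (3%:R * x0)%:P; -1].
Proof.
move=> X1 u; rewrite /= !cons_poly_def /X1 /u.
rewrite !(rmorphB, rmorphD, rmorphM, rmorphXn, rmorphMn, rmorph_nat, rmorphN, rmorph1, rmorph0).
ring.
Qed.

Lemma sigma_coef (M : fieldType) (a b t0 : M) :
  (a *: 'X + b%:P) \Po ('X + t0%:P) = Poly [:: a * t0 + b; a].
Proof.
rewrite /= !cons_poly_def comp_polyD comp_polyZ comp_polyX comp_polyC -!mul_polyC.
rewrite !(rmorphD, rmorphM, rmorph0). rewrite mul0r add0r. ring.
Qed.

Lemma mu_coef (M : fieldType) (c d e gam t0 : M) :
  (c *: 'X ^+ 3 + d *: 'X ^+ 2 + e *: 'X + gam%:P) \Po ('X + t0%:P) =
  Poly [:: c * t0 ^+ 3 + d * t0 ^+ 2 + e * t0 + gam; 3%:R * c * t0 ^+ 2 + 2%:R * d * t0 + e;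
           3%:R * c * t0 + d; c].
Proof.
rewrite /= !cons_poly_def !comp_polyD !comp_polyZ !rmorphXn /= comp_polyX comp_polyC -!mul_polyC.
rewrite !(rmorphD, rmorphM, rmorph0, rmorphXn, rmorph_nat). rewrite mul0r add0r. ring.
Qed.

Lemma PprimeE (M : fieldType) (fM gM : {poly M}) (a b c d e gam x0 t0 : M) :
  let P' := map_poly (fun q : {poly M} => q \Po ('X + t0%:P))
                     (trisec_poly fM gM a b c d e gam \Po ('X + (x0%:P)%:P)) in
  let ph := fM \Po ('X + t0%:P) in let ps := gM \Po ('X + t0%:P) in
  let s0 := a * t0 + b in
  let m0 := c * t0 ^+ 3 + d * t0 ^+ 2 + e * t0 + gam in
  let m1 := 3%:R * c * t0 ^+ 2 + 2%:R * d * t0 + e in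
  let m2 := 3%:R * c * t0 + d in
  let u0 := x0 * s0 + m0 in let u1 := x0 * a + m1 in let u2 := m2 in
  (P'`_0`_0 = u0 ^+ 2 - x0 ^+ 3 - x0 * ph`_0 - ps`_0) /\
  (P'`_0`_1 = 2%:R * u0 * u1 - x0 * ph`_1 - ps`_1) /\
  (P'`_0`_2 = 2%:R * u0 * u2 + u1 ^+ 2 - x0 * ph`_2 - ps`_2) /\
  (P'`_1`_0 = 2%:R * s0 * u0 - 3%:R * x0 ^+ 2 - ph`_0) /\
  (P'`_1`_1 = 2%:R * (s0 * u1 + a * u0) - ph`_1) /\
  (P'`_2`_0 = s0 ^+ 2 - 3%:R * x0).
Proof.
move=> P' ph ps s0 m0 m1 m2 u0 u1 u2.
have -> : P' = _ := PhiH M fM gM a b c d e gam x0 t0.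
rewrite E_Poly sigma_coef mu_coef.
rewrite !coef_Poly /=.
rewrite !(coefB, coefD, coefMn, coefCM, coefC, expr2, coef0M, coefM1, coefM2, coef_Poly) /=.
rewrite /u0 /u1 /u2 /m0 /m1 /m2 /s0 /ph /ps.
repeat split.
all: rewrite !(coef_cons, coefC) /=.
all: ring.
Qed.

Lemma sub0_eq (F : fieldType) (x y : F) : x - y = 0 -> x = y.
Proof. by move/eqP; rewrite subr_eq0 => /eqP. Qed.

Lemma core_exists (F : fieldType) (a b t0 f0 f1 f2 g0 g1 g2 xR yR tR s xQ yQ u1 m0 m1 m2 c : F)
 (hn : forall n : nat, (n.+1)%:R != 0 :> F)
 (hs : s = a * t0 + b) (hs0 : s != 0)
 (hxQ : xQ = s ^+ 2 / 3%:R) (hyQ : yQ = s ^+ 3 / 6%:R + f0 / (2%:R * s)) (hy0 : yQ != 0)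
 (hP0 : - (4%:R)^-1 * f0 ^+ 2 + (6%:R)^-1 * (s ^+ 4 * f0) + s ^+ 2 * g0 + (108%:R)^-1 * s ^+ 8 = 0)
 (hP1 : - (4%:R)^-1 * (2%:R * f0 * f1) + (6%:R)^-1 * (4%:R * s ^+ 3 * a * f0 + s ^+ 4 * f1)
        + (2%:R * s * a * g0 + s ^+ 2 * g1) + (108%:R)^-1 * (8%:R * s ^+ 7 * a) = 0)
 (hh : tR != t0)
 (hu1 : u1 = (f1 - 2%:R * a * yQ) / (2%:R * s)) (hm0 : m0 = yQ - s * xQ)
 (hm1 : m1 = u1 - a * xQ) (hm2 : m2 = (xQ * f2 + g2 - u1 ^+ 2) / (2%:R * yQ))
 (hc : c = (yR - (a * tR + b) * xR - m0 - m1 * (tR - t0) - m2 * (tR - t0) ^+ 2) / (tR - t0) ^+ 3) :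
 let d := m2 - 3%:R * c * t0 in
 let e := m1 - 3%:R * c * t0 ^+ 2 - 2%:R * d * t0 in
 let gam := m0 - m1 * t0 + m2 * t0 ^+ 2 - c * t0 ^+ 3 in
  let x0 := xQ in let s0 := a * t0 + b in
  let mu0 := c * t0 ^+ 3 + d * t0 ^+ 2 + e * t0 + gam in
  let mu1 := 3%:R * c * t0 ^+ 2 + 2%:R * d * t0 + e in
  let mu2 := 3%:R * c * t0 + d in
  let u0 := x0 * s0 + mu0 in let v1 := x0 * a + mu1 in let v2 := mu2 in
  (u0 ^+ 2 - x0 ^+ 3 - x0 * f0 - g0 = 0) /\
  (2%:R * u0 * v1 - x0 * f1 - g1 = 0) /\
  (2%:R * u0 * v2 + v1 ^+ 2 - x0 * f2 - g2 = 0) /\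
  (2%:R * s0 * u0 - 3%:R * x0 ^+ 2 - f0 = 0) /\
  (2%:R * (s0 * v1 + a * u0) - f1 = 0) /\
  (s0 ^+ 2 - 3%:R * x0 = 0) /\
  on_trisec a b c d e gam xQ yQ t0 /\ on_trisec a b c d e gam xR yR tR.
Proof.
move=> d e gam x0 s0 mu0 mu1 mu2 u0 v1 v2.
have h2 : (2%:R : F) != 0 by exact: hn 1%N.
have h3 : (3%:R : F) != 0 by exact: hn 2%N.
have h4 : (4%:R : F) != 0 by exact: hn 3%N.
have h6 : (6%:R : F) != 0 by exact: hn 5%N.
have h108 : (108%:R : F) != 0 by exact: hn 107%N.
have hht : tR - t0 != 0 by rewrite subr_eq0.
have es0 : s0 = s by rewrite hs.
have emu0 : mu0 = m0 by rewrite /mu0 /gam /e /d; ring.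
have emu1 : mu1 = m1 by rewrite /mu1 /e /d; ring.
have emu2 : mu2 = m2 by rewrite /mu2 /d; ring.
have eu0 : u0 = yQ by rewrite /u0 emu0 es0 hm0 /x0; ring.
have ev1 : v1 = u1 by rewrite /v1 emu1 hm1 /x0; ring.
have eg0 : g0 = (4%:R^-1 * f0 ^+ 2 - 6%:R^-1 * (s ^+ 4 * f0) - 108%:R^-1 * s ^+ 8) / s ^+ 2.
  apply: sub0_eq. rewrite -[RHS](mulr0 (s ^+ 2)^-1) -hP0. field. by rewrite ?h2 ?h3 ?h4 ?h6 ?h108 ?hs0 ?hy0 ?hht.
have eg1 : g1 = (4%:R^-1 * (2%:R * f0 * f1) - 6%:R^-1 * (4%:R * s ^+ 3 * a * f0 + s ^+ 4 * f1)
        - 2%:R * s * a * g0 - 108%:R^-1 * (8%:R * s ^+ 7 * a)) / s ^+ 2.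
  apply: sub0_eq. rewrite -[RHS](mulr0 (s ^+ 2)^-1) -hP1. field. by rewrite ?h2 ?h3 ?h4 ?h6 ?h108 ?hs0 ?hy0 ?hht.
split.
  rewrite eu0 /x0 eg0 hyQ hxQ. field. by rewrite ?h2 ?h3 ?h4 ?h6 ?h108 ?hs0 ?hy0 ?hht.
split.
  rewrite eu0 ev1 /x0 eg1 eg0 hu1 hyQ hxQ. field. by rewrite ?h2 ?h3 ?h4 ?h6 ?h108 ?hs0 ?hy0 ?hht.
split.
  rewrite eu0 ev1 /v2 emu2 hm2 /x0. field. by rewrite ?h2 ?h3 ?h4 ?h6 ?h108 ?hs0 ?hy0 ?hht.
split.
  rewrite eu0 es0 /x0 hyQ hxQ. field. by rewrite ?h2 ?h3 ?h4 ?h6 ?h108 ?hs0 ?hy0 ?hht.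
split.
  rewrite eu0 es0 ev1 hu1. field. by rewrite ?h2 ?h3 ?h4 ?h6 ?h108 ?hs0 ?hy0 ?hht.
split.
  rewrite es0 /x0 hxQ. field. by rewrite ?h2 ?h3 ?h4 ?h6 ?h108 ?hs0 ?hy0 ?hht.
split.
  rewrite /on_trisec; transitivity (s * xQ + mu0).
    by rewrite emu0 hm0; ring.
  by rewrite /mu0 hs; ring.
rewrite /on_trisec; transitivity ((a * tR + b) * xR + (m0 + m1 * (tR - t0) + m2 * (tR - t0) ^+ 2 + c * (tR - t0) ^+ 3)).
  rewrite hc. field. by rewrite ?h2 ?h3 ?h4 ?h6 ?h108 ?hs0 ?hy0 ?hht.
by rewrite /gam /e /d; ring.
Qed.

Lemma core_unique (F : fieldType) (a b t0 f1 f2 g2 xR yR tR s xQ yQ u1 m0 m1 m2 c : F)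
 (hn : forall n : nat, (n.+1)%:R != 0 :> F)
 (hs : s = a * t0 + b) (hs0 : s != 0) (hy0 : yQ != 0)
 (hh : tR != t0)
 (hu1 : u1 = (f1 - 2%:R * a * yQ) / (2%:R * s)) (hm0 : m0 = yQ - s * xQ)
 (hm1 : m1 = u1 - a * xQ) (hm2 : m2 = (xQ * f2 + g2 - u1 ^+ 2) / (2%:R * yQ))
 (hc : c = (yR - (a * tR + b) * xR - m0 - m1 * (tR - t0) - m2 * (tR - t0) ^+ 2) / (tR - t0) ^+ 3)
 (c' d' e' g' : F) :
  let x0 := xQ in let s0 := a * t0 + b in
  let mu0 := c' * t0 ^+ 3 + d' * t0 ^+ 2 + e' * t0 + g' in
  let mu1 := 3%:R * c' * t0 ^+ 2 + 2%:R * d' * t0 + e' in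
  let mu2 := 3%:R * c' * t0 + d' in
  let u0 := x0 * s0 + mu0 in let v1 := x0 * a + mu1 in let v2 := mu2 in
  on_trisec a b c' d' e' g' xQ yQ t0 ->
  2%:R * (s0 * v1 + a * u0) - f1 = 0 ->
  2%:R * u0 * v2 + v1 ^+ 2 - x0 * f2 - g2 = 0 ->
  on_trisec a b c' d' e' g' xR yR tR ->
  g' = m0 - m1 * t0 + m2 * t0 ^+ 2 - c * t0 ^+ 3.
Proof.
move=> x0 s0 mu0 mu1 mu2 u0 v1 v2 onQ E11 E02 onR.
have h2 : (2%:R : F) != 0 by exact: hn 1%N.
have hht : tR - t0 != 0 by rewrite subr_eq0.
have es0 : s0 = s by rewrite hs.
have eu0 : u0 = yQ by rewrite onQ /u0 /mu0 /x0 /s0; ring.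
have ev1 : v1 = u1.
  apply: sub0_eq; rewrite hu1 -[RHS](mulr0 (2%:R * s)^-1) -E11 es0 eu0.
  field. by rewrite ?h2 ?hs0.
have em2 : mu2 = m2.
  apply: sub0_eq; rewrite hm2 -[RHS](mulr0 (2%:R * yQ)^-1) -E02 eu0 ev1 /v2 /x0.
  field. by rewrite ?h2 ?hy0.
have em1 : mu1 = m1 by rewrite hm1 -ev1 /v1 /x0; ring.
have em0 : mu0 = m0 by rewrite hm0 -eu0 /u0 es0 /x0; ring.
have E : yR - (a * tR + b) * xR - (m0 + m1 * (tR - t0) + m2 * (tR - t0) ^+ 2 + c' * (tR - t0) ^+ 3) = 0.
  by rewrite -em0 -em1 -em2 onR /mu0 /mu1 /mu2; ring.
have ec : c' = c.
  apply: sub0_eq; rewrite hc -[RHS](mulr0 (- ((tR - t0) ^+ 3)^-1)) -E.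
  field. by rewrite ?expf_neq0.
rewrite -em0 -em1 -em2 -ec /mu0 /mu1 /mu2; ring.
Qed.


Lemma coef0X (M : fieldType) (p : {poly M}) n : (p ^+ n)`_0 = p`_0 ^+ n.
Proof.
elim: n => [|n IH]; first by rewrite !expr0 coefC.
by rewrite !exprS coef0M IH.
Qed.

Lemma coef1X (M : fieldType) (p : {poly M}) n :
  (p ^+ n.+1)`_1 = n.+1%:R * p`_0 ^+ n * p`_1.
Proof.
elim: n => [|n IH]; first by rewrite expr1 expr0 mul1r mul1r.
rewrite exprS coefM1 IH coef0X (exprS p`_0) !mulrS; ring.
Qed.

Lemma comp_polyXn (M : fieldType) (p q : {poly M}) n : (p ^+ n) \Po q = (p \Po q) ^+ n.
Proof.
elim: n => [|n IH]; first by rewrite !expr0 comp_polyC.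
by rewrite !exprS comp_polyM IH.
Qed.



Lemma dvd_taylor (M : fieldType) (p : {poly M}) (t : M) :
  ('X - t%:P) ^+ 2 %| p ->
  (p \Po ('X + t%:P))`_0 = 0 /\ (p \Po ('X + t%:P))`_1 = 0.
Proof.
case/dvdpP => q ->.
rewrite expr2 !rmorphM /= comp_polyB comp_polyX comp_polyC addrK -expr2.
by rewrite !coefMXn.
Qed.

Lemma PFam_coefs (M : fieldType) (fM gM : {poly M}) (a b t0 : M) :
  let Y := 'X + t0%:P in
  let ph := fM \Po Y in let ps := gM \Po Y in let s := a * t0 + b in
  let P := PFam fM gM a b \Po Y in
  P`_0 = - (4%:R)^-1 * ph`_0 ^+ 2 + (6%:R)^-1 * (s ^+ 4 * ph`_0) + s ^+ 2 * ps`_0 + (108%:R)^-1 * s ^+ 8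
  /\ P`_1 = - (4%:R)^-1 * (2%:R * ph`_0 * ph`_1) + (6%:R)^-1 * (4%:R * s ^+ 3 * a * ph`_0 + s ^+ 4 * ph`_1)
        + (2%:R * s * a * ps`_0 + s ^+ 2 * ps`_1) + (108%:R)^-1 * (8%:R * s ^+ 7 * a).
Proof.
move=> Y ph ps s P.
have eP : P = (- (4%:R)^-1) *: ph ^+ 2 + (6%:R)^-1 *: (Poly [:: s; a] ^+ 4 * ph)
  + Poly [:: s; a] ^+ 2 * ps + (108%:R)^-1 *: Poly [:: s; a] ^+ 8.
  rewrite /P /PFam !comp_polyD !comp_polyZ !comp_polyXn (comp_polyM _ fM) (comp_polyM _ gM) !comp_polyXn /Y.
  rewrite (_ : (a *: 'X + b%:P) \Po ('X + t0%:P) = Poly [:: s; a]) //; exact: sigma_coef.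
rewrite eP; split.
  rewrite !(coefD, coefZ, coef0M, coef0X, coef_Poly) /=; ring.
rewrite !(coefD, coefZ, coefM1, coef0M, coef1X, coef0X, coef_Poly) /=; ring.
Qed.


Lemma map_polyXn' (L M : fieldType) (j : {rmorphism L -> M}) (p : {poly L}) n :
  map_poly j (p ^+ n) = (map_poly j p) ^+ n.
Proof.
elim: n => [|n IH]; first by rewrite !expr0 rmorph1.
by rewrite !exprS rmorphM /= IH.
Qed.

Lemma map_PFam (L M : fieldType) (j : {rmorphism L -> M}) (fL gL : {poly L}) (a b : L) :
  map_poly j (PFam fL gL a b) = PFam (map_poly j fL) (map_poly j gL) (j a) (j b).
Proof.
rewrite /PFam.
rewrite !rmorphD /= !map_polyZ /= !map_polyXn' (rmorphM _ _ fL) (rmorphM _ _ gL) /= !map_polyXn'.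
rewrite !rmorphD /= map_polyZ map_polyX map_polyC /=.
by rewrite ?(rmorphN, fmorphV, rmorph_nat).
Qed.

Definition gam_of (F : fieldType) (a b t0 f0 f1 f2 g2 xR yR tR : F) : F :=
  let s := a * t0 + b in
  let xQ := s ^+ 2 / 3%:R in
  let yQ := s ^+ 3 / 6%:R + f0 / (2%:R * s) in
  let u1 := (f1 - 2%:R * a * yQ) / (2%:R * s) in
  let m0 := yQ - s * xQ in let m1 := u1 - a * xQ in
  let m2 := (xQ * f2 + g2 - u1 ^+ 2) / (2%:R * yQ) in
  let c := (yR - (a * tR + b) * xR - m0 - m1 * (tR - t0) - m2 * (tR - t0) ^+ 2) / (tR - t0) ^+ 3 in
  m0 - m1 * t0 + m2 * t0 ^+ 2 - c * t0 ^+ 3.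
Arguments gam_of {F}.

Lemma gam_of_map (L M : fieldType) (j : {rmorphism L -> M}) (a b t0 f0 f1 f2 g2 xR yR tR : L) :
  j (gam_of a b t0 f0 f1 f2 g2 xR yR tR) =
  gam_of (j a) (j b) (j t0) (j f0) (j f1) (j f2) (j g2) (j xR) (j yR) (j tR).
Proof.
rewrite /gam_of; cbv zeta.
rewrite !(rmorph_nat, rmorphXn, fmorphV, rmorphN, rmorphB, rmorphD, rmorphM). reflexivity.
Qed.

Section SF.
Variables (M : fieldType) (S : M -> Prop) (hS : subfield_pred S).
Lemma S_add x y : S x -> S y -> S (x + y). Proof. by case: hS => _ _ h _ _; exact: h. Qed.
Lemma S_opp x : S x -> S (- x). Proof. by case: hS => _ _ _ h _; exact: h. Qed.
Lemma S_mul x y : S x -> S y -> S (x * y). Proof. by case: hS => _ _ _ _ [h _]; exact: h. Qed.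
Lemma S_inv x : S x -> S (x ^-1).
Proof.
case: hS => S0 _ _ _ [_ hV] Sx.
have [->|nz] := eqVneq x 0; first by rewrite invr0.
exact: hV.
Qed.
Lemma S_nat n : S n%:R.
Proof.
case: hS => S0 S1 _ _ _.
elim: n => [|n IH] //; rewrite mulrSr; exact: S_add.
Qed.
Lemma S_exp x n : S x -> S (x ^+ n).
Proof.
case: hS => S0 S1 _ _ _ Sx.
elim: n => [|n IH]; first by rewrite expr0.
rewrite exprS; exact: S_mul.
Qed.
Lemma S_one : S 1. Proof. by case: hS. Qed.
End SF.

Ltac solveS hS := repeat first
  [ assumption | apply: (@S_add _ _ hS) | apply: (@S_mul _ _ hS) | apply: (@S_opp _ _ hS)
  | apply: (@S_inv _ _ hS) | apply: (@S_nat _ _ hS) | apply: (@S_exp _ _ hS) | apply: (@S_one _ _ hS) ].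

Lemma S_gam (M : fieldType) (S : M -> Prop) (hS : subfield_pred S) (a b t0 f0 f1 f2 g2 xR yR tR : M) :
  S a -> S b -> S t0 -> S f0 -> S f1 -> S f2 -> S g2 -> S xR -> S yR -> S tR ->
  S (gam_of a b t0 f0 f1 f2 g2 xR yR tR).
Proof.
move=> *; rewrite /gam_of; cbv zeta.
solveS hS.
Qed.

Lemma coef0_taylor (M : fieldType) (p : {poly M}) (t : M) : (p \Po ('X + t%:P))`_0 = p.[t].
Proof. by rewrite -horner_coef0 horner_comp !hornerE. Qed.

Theorem proposition3p7 (k : fieldType) (hk : [pchar k] =i pred0)
  (f g : {poly k}) (hf : (size f <= 5)%N) (hg : (size g <= 7)%N)
  (hS : smooth_dP1 f g)
  (L : fieldType) (iota : {rmorphism k -> L}) (a b t0 : L)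
  (hFam : in_Fam (map_poly iota f) (map_poly iota g) a b t0)
  (M : fieldType) (j : {rmorphism L -> M}) (xR yR tR : M)
  (hR : yR ^+ 2 = xR ^+ 3 + (map_poly j (map_poly iota f)).[tR] * xR
                  + (map_poly j (map_poly iota g)).[tR])
  (htR : tR != j t0) :
  let fM := map_poly j (map_poly iota f) in
  let gM := map_poly j (map_poly iota g) in
  let xQ := j (Qx a b t0) in
  let yQ := j (Qy (map_poly iota f) a b t0) in
  (exists gam : M,
     [/\ in_gen_field j xR yR tR gam,
         in_T fM gM (j a) (j b) xQ yQ (j t0) gam xR yR tR
       & forall gam' : M, in_gen_field j xR yR tR gam' ->
           in_T fM gM (j a) (j b) xQ yQ (j t0) gam' xR yR tR -> gam' = gam])
  /\
  ((exists xl yl tl : L, [/\ xR = j xl, yR = j yl & tR = j tl]) ->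
   exists gam0 : L, in_T fM gM (j a) (j b) xQ yQ (j t0) (j gam0) xR yR tR).
Proof.
move=> fM gM xQ yQ.
have hn : forall n : nat, (n.+1)%:R != 0 :> M.
  have hM : [pchar M] =i pred0.
    by move=> p; rewrite (fmorph_pchar j) (fmorph_pchar iota) hk.
  by move/pcharf0P: hM => hM n; rewrite hM.
set fL := map_poly iota f; set gL := map_poly iota g.
set phL := fL \Po ('X + t0%:P); set psL := gL \Po ('X + t0%:P).
have ef : forall i, (fM \Po ('X + (j t0)%:P))`_i = j phL`_i.
  by move=> i; rewrite -coef_map /phL map_comp_poly rmorphD /= map_polyX map_polyC.
have eg : forall i, (gM \Po ('X + (j t0)%:P))`_i = j psL`_i.
  by move=> i; rewrite -coef_map /psL map_comp_poly rmorphD /= map_polyX map_polyC.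
case: hFam => ht0 hab hfne hdr.
set s := j a * j t0 + j b.
have es : s = j (a * t0 + b) by rewrite rmorphD rmorphM.
have hs0 : s != 0 by rewrite es fmorph_eq0.
have exQ : xQ = s ^+ 2 / 3%:R by rewrite /xQ /Qx fmorph_div rmorphXn rmorph_nat es.
have ef0 : phL`_0 = fL.[t0] by rewrite coef0_taylor.
have eyQ : yQ = s ^+ 3 / 6%:R + (fM \Po ('X + (j t0)%:P))`_0 / (2%:R * s).
  rewrite /yQ /Qy ef ef0 rmorphD !fmorph_div rmorphXn rmorphM !rmorph_nat es //.
set Y := 'X + (j t0)%:P.
set f0 := (fM \Po Y)`_0; set f1 := (fM \Po Y)`_1; set f2 := (fM \Po Y)`_2.
set g0 := (gM \Po Y)`_0; set g1 := (gM \Po Y)`_1; set g2 := (gM \Po Y)`_2.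
have hf0 : f0 != - s ^+ 4 / 3%:R.
  have : j fL.[t0] != j (- (a * t0 + b) ^+ 4 / 3%:R) by rewrite (inj_eq (fmorph_inj j)).
  by rewrite /f0 ef ef0 fmorph_div rmorphN rmorphXn rmorph_nat -es.
case/andP: hdr => hd _.
have hdM : ('X - (j t0)%:P) ^+ 2 %| PFam fM gM (j a) (j b).
  rewrite -map_PFam (_ : ('X - (j t0)%:P) ^+ 2 = map_poly j (('X - t0%:P) ^+ 2)) ?dvdp_map //.
  by rewrite map_polyXn' rmorphB /= map_polyX map_polyC.
case: (dvd_taylor _ _ _ hdM) => z0 z1.
case: (PFam_coefs _ fM gM (j a) (j b) (j t0)) => c0 c1.
have hP0 : - (4%:R)^-1 * f0 ^+ 2 + (6%:R)^-1 * (s ^+ 4 * f0) + s ^+ 2 * g0 + (108%:R)^-1 * s ^+ 8 = 0.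
  by rewrite -z0 c0.
have hP1 : - (4%:R)^-1 * (2%:R * f0 * f1) + (6%:R)^-1 * (4%:R * s ^+ 3 * (j a) * f0 + s ^+ 4 * f1)
        + (2%:R * s * (j a) * g0 + s ^+ 2 * g1) + (108%:R)^-1 * (8%:R * s ^+ 7 * (j a)) = 0.
  by rewrite -z1 c1.
have h2 : (2%:R : M) != 0 by exact: hn 1%N.
have h3 : (3%:R : M) != 0 by exact: hn 2%N.
have h6 : (6%:R : M) != 0 by exact: hn 5%N.
set yQi := s ^+ 3 / 6%:R + f0 / (2%:R * s).
set xQi := s ^+ 2 / 3%:R.
have hy0 : yQi != 0.
  apply: contra hf0 => /eqP H0; apply/eqP.
  have -> : f0 = yQi * (2%:R * s) - s ^+ 4 / 3%:R.
    rewrite /yQi; field. by rewrite ?h2 ?h3 ?h6 ?hs0.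
  by rewrite H0 mul0r sub0r mulNr.
set u1 := (f1 - 2%:R * j a * yQi) / (2%:R * s).
set m0 := yQi - s * xQi.
set m1 := u1 - j a * xQi.
set m2 := (xQi * f2 + g2 - u1 ^+ 2) / (2%:R * yQi).
set c := (yR - (j a * tR + j b) * xR - m0 - m1 * (tR - j t0) - m2 * (tR - j t0) ^+ 2) / (tR - j t0) ^+ 3.
set gam := gam_of (j a) (j b) (j t0) f0 f1 f2 g2 xR yR tR.
have CE := @core_exists M (j a) (j b) (j t0) f0 f1 f2 g0 g1 g2 xR yR tR s xQi yQi u1 m0 m1 m2 c
  hn erefl hs0 erefl erefl hy0 hP0 hP1 htR erefl erefl erefl erefl erefl.
case: CE => E00 [E01 [E02 [E10 [E11 [E20 [onQ onR]]]]]].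
set d := m2 - 3%:R * c * j t0.
set e := m1 - 3%:R * c * j t0 ^+ 2 - 2%:R * d * j t0.
have inTgam : in_T fM gM (j a) (j b) xQ yQ (j t0) gam xR yR tR.
  exists c, d, e; split; [split|].
  - rewrite exQ eyQ; exact: onQ.
  - rewrite exQ /mult_ge => i l hil.
    case: (PprimeE M fM gM (j a) (j b) c d e gam xQi (j t0)) => e00 [e01 [e02 [e10 [e11 e20]]]].
    case: i hil => [|[|[|i]]] hil; case: l hil => [|[|[|l]]] hil //.
    + exact: (etrans e00 E00).
    + exact: (etrans e01 E01).
    + exact: (etrans e02 E02).
    + exact: (etrans e10 E10).
    + exact: (etrans e11 E11).
    + exact: (etrans e20 E20).
  - exact: onR.
split.
  exists gam; split.
  - move=> S hSp hj hx hy ht.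
    apply: (S_gam _ _ hSp) => //; rewrite ?/f0 ?/f1 ?/f2 ?/g2 ?ef ?eg; exact: hj.
  - exact: inTgam.
  - move=> gam' _ [c' [d' [e' [[onQ' hm'] onR']]]].
    rewrite exQ in hm'; rewrite exQ eyQ in onQ'.
    case: (PprimeE M fM gM (j a) (j b) c' d' e' gam' xQi (j t0)) => e00 [e01 [e02 [e10 [e11 e20]]]].
    have E11' := etrans (esym e11) (hm' 1%N 1%N erefl).
    have E02' := etrans (esym e02) (hm' 0%N 2%N erefl).
    exact: (@core_unique M (j a) (j b) (j t0) f1 f2 g2 xR yR tR s xQi yQi u1 m0 m1 m2 c
      hn erefl hs0 hy0 htR erefl erefl erefl erefl erefl c' d' e' gam' onQ' E11' E02' onR').
move=> [xl [yl [tl [ex ey et]]]].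
exists (gam_of a b t0 phL`_0 phL`_1 phL`_2 psL`_2 xl yl tl).
rewrite gam_of_map -ex -ey -et -!ef -eg.
exact: inTgam.
Qed.
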